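(* For a nonzero integer $k$ let $$P_k(t)=k-3kt+5kt^2-7kt^3+(8k+1)t^4-7kt^5+5kt^6-3kt^7+kt^8,$$ the Alexander polynomial of the 2-bridge knot $K([2,2,2,2k,-2,-2,-2,-2])$. Then: (1) if $k\in\{1,2\}$, no zero of $P_k$ is real or of modulus $1$; (2) if $k\in\{3,4,5,6\}$, $P_k$ has exactly four zeros of modulus $1$ (all non-real) and four non-real zeros not of modulus $1$; (3) if $k\ge7$, all eight zeros of $P_k$ have modulus $1$; (4) if $k<0$, $P_k$ has exactly two real zeros and six non-real zeros of modulus $1$. In particular $P_k$ has no real zero when $k>0$. *)

(* Defs.v *)
From HB Require Import structures.
From mathcomp Require Import all_boot all_order all_algebra all_field.
Set Implicit Arguments. Unset Strict Implicit. Unset Printing Implicit Defensive.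
Import Order.TTheory GRing.Theory Num.Theory.
Local Open Scope ring_scope.

Definition Pk (k : int) : {poly algC} :=
  Poly [seq (c%:~R : algC) | c <- [:: k; -3 * k; 5 * k; -7 * k; 8 * k + 1;
                                       -7 * k; 5 * k; -3 * k; k]].

(* Main.v *)
Require Import Defs.
From HB Require Import structures.
From mathcomp Require Import all_boot all_order all_algebra all_field.
From mathcomp Require Import ring lra zify.
Import Order.TTheory GRing.Theory Num.Theory.
Local Open Scope ring_scope.

Definition qe {R : comNzRingType} (kk x : R) := 1 + 2*kk*x + kk*x^+2 - 3*kk*x^+3 + kk*x^+4.
Definition Qp {R : comNzRingType} (kk : R) : {poly R} := Poly [:: 1; 2*kk; kk; -3*kk; kk].

Lemma hornerQ (R : comNzRingType) (kk x : R) : (Qp kk).[x] = qe kk x.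
Proof. rewrite /Qp horner_Poly /= /qe; ring. Qed.

Definition pe (kk t : algC) := kk - 3*kk*t + 5*kk*t^+2 - 7*kk*t^+3 + (8*kk+1)*t^+4
   - 7*kk*t^+5 + 5*kk*t^+6 - 3*kk*t^+7 + kk*t^+8.

Lemma hornerP k t : (Pk k).[t] = pe (k%:~R) t.
Proof. rewrite /Pk horner_Poly /= /pe !intrM !intrD /=. ring. Qed.

Lemma pe_qe kk t : t != 0 -> pe kk t = t^+4 * qe kk (t + t^-1).
Proof. move=> t0; rewrite /pe /qe; by field. Qed.

Lemma QC_lead (kk : algC) : kk != 0 -> lead_coef (Qp kk) = kk /\ size (Qp kk) = 5%N.
Proof.
move=> k0; have e : Qp kk = [:: 1; 2*kk; kk; -3*kk; kk] :> seq algC by apply: (PolyK (c:=0)).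
by rewrite /lead_coef e.
Qed.

Lemma ivt_qe (kr a b : algR) : a <= b -> qe kr a * qe kr b < 0 ->
  exists2 y, a < y < b & qe kr y = 0.
Proof.
move=> hab hs.
have [ha|ha] := ltP (qe kr a) 0.
  have hb : 0 < qe kr b by nra.
  have hp : (Qp kr).[a] <= 0 <= (Qp kr).[b] by rewrite !hornerQ (ltW ha) (ltW hb).
  have [y /andP[y1 y2] ry] := poly_ivt hab hp.
  move: ry; rewrite rootE hornerQ => /eqP ry.
  exists y => //; apply/andP; split; rewrite lt_neqAle ?y1 ?y2 andbT.
    by apply/eqP=> e; move: ha; rewrite e ry ltxx.
  by apply/eqP=> e; move: hb; rewrite -e ry ltxx.
have hb : qe kr b < 0.
  nra.
have hp : (- Qp kr).[a] <= 0 <= (- Qp kr).[b].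
  by rewrite !hornerN !hornerQ oppr_le0 oppr_ge0 ha (ltW hb).
have [y /andP[y1 y2] ry] := poly_ivt hab hp.
move: ry; rewrite rootE hornerN hornerQ oppr_eq0 => /eqP ry.
exists y => //; apply/andP; split; rewrite lt_neqAle ?y1 ?y2 andbT.
  apply/eqP=> e; move: hs; rewrite e ry mul0r ltxx //.
by apply/eqP=> e; move: hb; rewrite -e ry ltxx.
Qed.

Lemma qe_val (kr y : algR) : algRval (qe kr y) = qe (algRval kr) (algRval y).
Proof. by rewrite /qe !(rmorphD, rmorphN, rmorphM, rmorphXn, rmorph_nat, rmorph1). Qed.
Definition rt1 (x : algC) := (x + sqrtC (x^+2 - 4)) / 2.
Definition rt2 (x : algC) := (x - sqrtC (x^+2 - 4)) / 2.

Lemma rt_sum x : rt1 x + rt2 x = x.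
Proof. rewrite /rt1 /rt2; by field. Qed.

Lemma rt_prod x : rt1 x * rt2 x = 1.
Proof.
rewrite /rt1 /rt2; have := sqrtCK (x^+2 - 4); set s := sqrtC _ => hs.
have -> : (x + s) / 2 * ((x - s) / 2) = (x^+2 - s^+2) / 4 by field.
rewrite hs; by field.
Qed.

Lemma C1 (z w : algC) : z * w = 1 -> z + w \notin Num.real -> z \notin Num.real.
Proof.
move=> hzw; apply: contra => zR.
have wE : w = z^-1.
  have z0 : z != 0 by apply: contra_eq_neq hzw => ->; rewrite mul0r eq_sym oner_eq0.
  by apply: (mulfI z0); rewrite hzw divff.
by rewrite wE rpredD ?rpredV.
Qed.

Lemma C2 (z w : algC) : z * w = 1 -> z + w \notin Num.real -> `|z| != 1.
Proof.
move=> hzw; apply: contra => /eqP nz.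
have z0 : z != 0 by apply: contra_eq_neq hzw => ->; rewrite mul0r eq_sym oner_eq0.
have wE : w = z^*.
  apply: (mulfI z0); rewrite hzw -normCK nz expr1n //.
rewrite wE CrealE rmorphD /= conjCK addrC.
by [].
Qed.

Lemma A1 (z w : algC) : z * w = 1 -> z + w \in Num.real -> -2 < z + w < 2 -> z \notin Num.real.
Proof.
move=> hzw _ hb; apply/negP => zR.
have wR : w \in Num.real.
  have z0 : z != 0 by apply: contra_eq_neq hzw => ->; rewrite mul0r eq_sym oner_eq0.
  have -> : w = z^-1 by apply: (mulfI z0); rewrite hzw divff.
  by rewrite rpredV.
pose a := in_algR zR; pose b := in_algR wR.
have hab : a * b = 1 by apply: val_inj.
have : -2 < a + b < 2 by [].
move=> /andP[h1 h2]; clear hb hzw.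
have := sqr_ge0 (a - b); have : 0 < (2 - (a+b)) * (2 + (a+b)) by apply: mulr_gt0; lra.
nra.
Qed.

Lemma A2 (z w : algC) : z * w = 1 -> z + w \in Num.real -> -2 < z + w < 2 -> `|z| == 1.
Proof.
move=> hzw xR hb.
have zNR := @A1 z w hzw xR hb.
have h1 : (z^* - z) * (z^* - w) = 0.
  have e : (z^* - z) * (z^* - w) = (z^*)^+2 - (z + w) * z^* + z * w by ring.
  have e2 : (z^*)^+2 - (z + w) * z^* + z * w = (z^+2 - (z + w) * z + z * w)^*.
    have hx := CrealP xR; rewrite -{1}hx hzw !rmorphD !rmorphN !rmorphM rmorph1 /=; ring.
  rewrite e e2.
  have -> : z^+2 - (z + w) * z + z * w = 0 by ring.
  by rewrite rmorph0.
move/eqP: h1; rewrite mulf_eq0 !subr_eq0 => /orP[/eqP h|/eqP h].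
  by move: zNR; rewrite CrealE h eqxx.
have : `|z| ^+ 2 = 1 by rewrite normCK h hzw.
move=> /eqP; rewrite sqrf_eq1 => /orP[//|/eqP hn].
by have := normr_ge0 z; rewrite hn ler0N1.
Qed.

Lemma B1 (x : algC) : x \in Num.real -> 2 < x -> (rt1 x \in Num.real) && (rt2 x \in Num.real).
Proof.
move=> xR hx.
have x0 : 0 < x by apply: lt_trans hx.
have hs : 0 <= x^+2 - 4.
  have -> : x^+2 - 4 = (x - 2) * (x + 2) by ring.
  apply: mulr_ge0; first by rewrite subr_ge0 ltW.
  by apply: addr_ge0; rewrite ltW.
have sR : sqrtC (x^+2 - 4) \in Num.real by apply: ger0_real; rewrite sqrtC_ge0.
apply/andP; split; (apply: rpredM; last by rewrite rpredV realn); [apply: rpredD|apply: rpredB] => //.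
Qed.
Lemma fdec (R : comNzRingType) (kk x : R) : qe kk x = 1 + kk * (x * (x - 2) * (x^+2 - x - 1)).
Proof. rewrite /qe; ring. Qed.

Lemma L1 (kr y : algR) : 0 < kr -> qe kr y = 0 -> -1 < y < 2.
Proof.
move=> hk; rewrite fdec => h.
have [hy|hy] := leP 2 y.
  have : 0 <= y * (y - 2) * (y^+2 - y - 1).
    apply: mulr_ge0; [apply: mulr_ge0|]; nra.
  nra.
have [hy'|hy'] := leP y (-1).
  have : 0 <= y * (y - 2) * (y^+2 - y - 1).
    apply: mulr_ge0; [apply: mulr_le0|]; nra.
  nra.
by apply/andP; split.
Qed.

Lemma L2 (kr y : algR) : 0 < kr <= 2 -> qe kr y = 0 -> False.
Proof.
move=> /andP[h1 h2]; rewrite fdec => h.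
have hf : 0 < 2 * (y * (y - 2) * (y ^+ 2 - y - 1)) + 1.
  have e : 2 * (y * (y - 2) * (y ^+ 2 - y - 1)) + 1 =
     2 * (y^+2 - 3/2 * y - 2/3)^+2 + y^+2/6 + 1/9 by field.
  rewrite e; have := sqr_ge0 (y^+2 - 3/2 * y - 2/3); have := sqr_ge0 y; lra.
nra.
Qed.

Lemma L3 (kr y : algR) : 0 < kr <= 6 -> 0 <= y -> qe kr y = 0 -> False.
Proof.
move=> /andP[h1 h2] hy; rewrite fdec => h.
have [hy2|hy2] := leP 2 y.
  have : 0 <= y * (y - 2) * (y^+2 - y - 1).
    apply: mulr_ge0; [apply: mulr_ge0|]; nra.
  nra.
have [hy3|hy3] := leP y (3/2).
  have : 0 <= y * (y - 2) * (y^+2 - y - 1).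
    apply: mulr_le0; [apply: mulr_ge0_le0|]; nra.
  nra.
have hint : 0 <= (y - 31/17)^+2 * (6 * y^+2 + 66/17 * y + 60/289).
  apply: mulr_ge0; [exact: sqr_ge0|nra].
have hf : 0 < 6 * (y * (y - 2) * (y ^+ 2 - y - 1)) + 1 by nra.
nra.
Qed.

Definition rsof (xs : seq algC) := flatten [seq [:: rt1 x; rt2 x] | x <- xs].

Lemma rsof_cons x xs : rsof (x :: xs) = rt1 x :: rt2 x :: rsof xs.
Proof. by []. Qed.

Lemma size_rsof xs : size (rsof xs) = (size xs).*2.
Proof. by elim: xs => // x xs IH; rewrite rsof_cons /= IH. Qed.

Lemma count_rsof (P c : pred algC) xs :
  {in xs, forall x, P (rt1 x) = c x /\ P (rt2 x) = c x} ->
  count P (rsof xs) = (count c xs).*2.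
Proof.
elim: xs => // x xs IH h.
have [h1 h2] := h x (mem_head _ _).
rewrite rsof_cons /= h1 h2 IH; last by move=> y hy; apply: h; rewrite inE hy orbT.
by case: (c x) => //=; rewrite doubleS.
Qed.

Lemma all_rsof (P : pred algC) xs :
  {in xs, forall x, P (rt1 x) && P (rt2 x)} -> all P (rsof xs).
Proof.
elim: xs => // x xs IH h.
rewrite rsof_cons /= andbA h ?mem_head //=.
by apply: IH => y hy; apply: h; rewrite inE hy orbT.
Qed.

Lemma prod_rsof xs t :
  \prod_(z <- rsof xs) (t - z) = \prod_(x <- xs) (t^+2 - x * t + 1).
Proof.
elim: xs => [|x xs IH]; first by rewrite !big_nil.
rewrite rsof_cons !big_cons IH mulrA; congr (_ * _).
have e : (t - rt1 x) * (t - rt2 x) = t^+2 - (rt1 x + rt2 x) * t + rt1 x * rt2 x by ring.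
by rewrite e rt_sum rt_prod.
Qed.

Lemma prod_mul (t : algC) (F : algC -> algC) xs :
  \prod_(x <- xs) (t * F x) = t ^+ size xs * \prod_(x <- xs) F x.
Proof.
elim: xs => [|x xs IH]; first by rewrite !big_nil expr0 mulr1.
by rewrite !big_cons IH /= exprS; ring.
Qed.

Lemma prod_ge (c : algC) (F : algC -> algC) xs : 0 <= c ->
  {in xs, forall x, c <= F x} -> c ^+ size xs <= \prod_(x <- xs) F x.
Proof.
move=> c0; elim: xs => [|x xs IH] h; first by rewrite big_nil expr0.
rewrite big_cons /= exprS; apply: ler_pM => //; first by rewrite exprn_ge0.
  by apply: h; rewrite mem_head.
by apply: IH => y hy; apply: h; rewrite inE hy orbT.
Qed.

Lemma poly_eq_nz (p q : {poly algC}) : (forall t, t != 0 -> p.[t] = q.[t]) -> p = q.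
Proof.
move=> h; apply/eqP; rewrite -subr_eq0; apply/negPn/negP => hne.
pose rs := [seq (i.+1)%:R : algC | i <- iota 0 (size (p - q))].
have hall : all (root (p - q)) rs.
  apply/allP => z /mapP [i _ ->]; rewrite rootE hornerD hornerN h ?subrr //.
  by rewrite pnatr_eq0.
have hu : uniq rs.
  rewrite map_inj_uniq ?iota_uniq // => i j /eqP; rewrite eqr_nat => /eqP; by case.
have := max_poly_roots hne hall hu.
by rewrite size_map size_iota ltnn.
Qed.

Lemma two_count (P : pred algC) a b s : a != b -> a \in s -> b \in s -> P a -> P b ->
  (1 < count P s)%N.
Proof.
move=> ab; elim: s => // c s IH; rewrite !inE => ha hb pa pb /=.
have [ca|ca] := eqVneq c a.
  have bs : b \in s by move: hb; rewrite ca eq_sym (negPf ab).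
  have : (0 < count P s)%N by rewrite -has_count; apply/hasP; exists b.
  by rewrite ca pa; case: (count P s).
have as_ : a \in s by move: ha; rewrite eq_sym (negPf ca).
have [cb|cb] := eqVneq c b.
  have : (0 < count P s)%N by rewrite -has_count; apply/hasP; exists a.
  by rewrite cb pb; case: (count P s).
have bs : b \in s by move: hb; rewrite eq_sym (negPf cb).
by have := IH as_ bs pa pb; case: (P c) => //= h; apply: ltnW.
Qed.

Definition inU (x : algC) := (x \in Num.real) && (-2 < x < 2).
Definition bigR (x : algC) := (x \in Num.real) && (2 < x).

Lemma rtA x : inU x -> [/\ rt1 x \notin Num.real, `|rt1 x| == 1,
                          rt2 x \notin Num.real & `|rt2 x| == 1].
Proof.
case/andP => xR hb.
have h1 := rt_prod x; have h2 := rt_sum x.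
have h1' : rt2 x * rt1 x = 1 by rewrite mulrC.
have h2' : rt2 x + rt1 x = x by rewrite addrC.
split; [apply: (@A1 _ (rt2 x))|apply: (@A2 _ (rt2 x))|apply: (@A1 _ (rt1 x))|apply: (@A2 _ (rt1 x))];
  rewrite ?h1 ?h2 ?h1' ?h2' //.
Qed.

Lemma rtC x : x \notin Num.real -> [/\ rt1 x \notin Num.real, `|rt1 x| != 1,
                          rt2 x \notin Num.real & `|rt2 x| != 1].
Proof.
move=> xR.
have h1 := rt_prod x; have h2 := rt_sum x.
have h1' : rt2 x * rt1 x = 1 by rewrite mulrC.
have h2' : rt2 x + rt1 x = x by rewrite addrC.
split; [apply: (@C1 _ (rt2 x))|apply: (@C2 _ (rt2 x))|apply: (@C1 _ (rt1 x))|apply: (@C2 _ (rt1 x))];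
  rewrite ?h1 ?h2 ?h1' ?h2' //.
Qed.

Lemma inU_val (y : algR) : -2 < y < 2 -> inU (algRval y).
Proof.
case/andP => h1 h2; rewrite /inU algRvalP /=.
have e1 : algRval (-2) < algRval y by [].
have e2 : algRval y < algRval 2 by [].
by rewrite rmorphN rmorph_nat in e1; rewrite rmorph_nat in e2; rewrite e1 e2.
Qed.

Lemma bigR_val (y : algR) : 2 < y -> bigR (algRval y).
Proof.
move=> h; rewrite /bigR algRvalP /=.
have e : algRval 2 < algRval y by [].
by rewrite rmorph_nat in e.
Qed.

Lemma inU_bigR x : inU x -> bigR x = false.
Proof. by case/andP => _ /andP[_ h]; rewrite /bigR; apply/negP => /andP[_ /(lt_trans h)]; rewrite ltxx. Qed.

Lemma qe_conj (k : int) x : (qe (k%:~R : algC) x)^* = qe (k%:~R) x^*.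
Proof. by rewrite /qe !(rmorphD, rmorphN, rmorphM, rmorphXn, rmorph_nat, rmorph1, rmorph_int). Qed.

Lemma realroot (k : int) (x : algC) (xR : x \in Num.real) :
  qe (k%:~R : algC) x = 0 -> qe (k%:~R : algR) (in_algR xR) = 0.
Proof.
move=> h; have e := qe_val (k%:~R) (in_algR xR).
rewrite rmorph_int in e; change (algRval (in_algR xR)) with x in e.
rewrite h in e; apply: val_inj; exact: e.
Qed.

Lemma four_perm (xs : seq algC) (y1 y2 y3 y4 : algR) : size xs = 4%N ->
  y1 < y2 -> y2 < y3 -> y3 < y4 ->
  algRval y1 \in xs -> algRval y2 \in xs -> algRval y3 \in xs -> algRval y4 \in xs ->
  perm_eq xs [:: algRval y1; algRval y2; algRval y3; algRval y4].
Proof.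
move=> sx h12 h23 h34 m1 m2 m3 m4.
set ys := [:: algRval y1; algRval y2; algRval y3; algRval y4].
have uy : uniq ys.
  have -> : ys = map algRval [:: y1; y2; y3; y4] by [].
  rewrite (map_inj_uniq val_inj); apply: lt_sorted_uniq => /=.
  by rewrite h12 h23 h34.
have sub : {subset ys <= xs}.
  by move=> z; rewrite !inE => /or4P [] /eqP ->.
have sz : (size xs <= size ys)%N by rewrite sx.
have ux := leq_size_uniq uy sub sz.
have [_ eq] := uniq_min_size uy sub sz.
by apply: uniq_perm => // z; rewrite eq.
Qed.

Theorem theoremC1 (k : int) (hk : k != 0) :
  exists rs : seq algC,
    [/\ size rs = 8%N,
        Pk k = (k%:~R : algC) *: \prod_(z <- rs) ('X - z%:P)
      & [/\ ((k \in [:: 1; 2]) ->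
          all (fun z => (z \notin Num.real) && (`|z| != 1)) rs),
        ((3 <= k <= 6) ->
          [/\ count (fun z => `|z| == 1) rs = 4%N,
              all (fun z => (`|z| == 1) ==> (z \notin Num.real)) rs
            & count (fun z => (`|z| != 1) && (z \notin Num.real)) rs = 4%N]),
        ((7 <= k) -> all (fun z => `|z| == 1) rs),
        ((k < 0) ->
          count (fun z => z \in Num.real) rs = 2%N /\
          count (fun z => (z \notin Num.real) && (`|z| == 1)) rs = 6%N)
      & ((0 < k) -> all (fun z => z \notin Num.real) rs)]].
Proof.
set kk : algC := k%:~R.
set kr : algR := k%:~R.
have k0 : kk != 0 by rewrite intr_eq0.
have [hl hsz] := @QC_lead kk k0.
have [xs hxs] := closed_field_poly_normal (Qp kk).
rewrite hl in hxs.
have sxs : size xs = 4%N.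
  have := congr1 (fun p : {poly algC} => size p) hxs; rewrite size_scale // size_prod_XsubC hsz; by case.
have hev : forall u, qe kk u = kk * \prod_(x <- xs) (u - x).
  move=> u; rewrite -hornerQ {1}hxs hornerZ horner_prod; congr (_ * _).
  by apply: eq_bigr => x _; rewrite hornerXsubC.
have memxs : forall u, (u \in xs) = (qe kk u == 0).
  move=> u; rewrite hev mulf_eq0 (negPf k0) /=.
  have -> : \prod_(x <- xs) (u - x) = (\prod_(x <- xs) ('X - x%:P)).[u].
    by rewrite horner_prod; apply: eq_bigr => x _; rewrite hornerXsubC.
  by rewrite -rootE root_prod_XsubC.
have realx : forall x (xR : x \in Num.real), x \in xs -> qe kr (in_algR xR) = 0.
  by move=> x xR; rewrite memxs => /eqP /realroot.
exists (rsof xs); split.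
- by rewrite size_rsof sxs.
- apply: poly_eq_nz => t t0.
  rewrite hornerP pe_qe // hev hornerZ horner_prod.
  have -> : \prod_(z <- rsof xs) ('X - z%:P).[t] = \prod_(z <- rsof xs) (t - z).
    by apply: eq_bigr => z _; rewrite hornerXsubC.
  rewrite prod_rsof.
  have -> : \prod_(x <- xs) (t ^+ 2 - x * t + 1) = \prod_(x <- xs) (t * (t + t^-1 - x)).
    by apply: eq_bigr => x _; by field.
  by rewrite prod_mul sxs; ring.
have pos : 0 < k -> {in xs, forall x, (x \notin Num.real) || inU x}.
  move=> kp x hx; case: (boolP (x \in Num.real)) => //= xR.
  have kr0 : 0 < kr by rewrite ltr0z.
  have /andP[h1 h2] := @L1 kr _ kr0 (realx x xR hx).
  have : -2 < in_algR xR < 2 by apply/andP; split; lra.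
  by move/inU_val.
have getroot : forall a b : algR, a <= b -> qe kr a * qe kr b < 0 ->
    exists2 y : algR, a < y < b & algRval y \in xs.
  move=> a b hab hs; have [y hy ry] := @ivt_qe kr a b hab hs.
  exists y => //; rewrite memxs.
  have := qe_val kr y; rewrite ry rmorph0 rmorph_int => <-; by [].
have ge7 : 7 <= k -> {in xs, forall x, inU x}.
  move=> k7.
  have hk7 : (7:algR) <= kr by rewrite (ler_int algR 7 k).
  have [y1 /andP[a1 b1] m1] := @getroot (-1) (-1/3) ltac:(lra) ltac:(rewrite /qe; nra).
  have [y2 /andP[a2 b2] m2] := @getroot (-1/3) 0 ltac:(lra) ltac:(rewrite /qe; nra).
  have [y3 /andP[a3 b3] m3] := @getroot 0 (9/5) ltac:(lra) ltac:(rewrite /qe; nra).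
  have [y4 /andP[a4 b4] m4] := @getroot (9/5) 2 ltac:(lra) ltac:(rewrite /qe; nra).
  have hp := @four_perm xs y1 y2 y3 y4 sxs ltac:(lra) ltac:(lra) ltac:(lra) m1 m2 m3 m4.
  move=> x; rewrite (perm_mem hp) !inE => /or4P [] /eqP ->; apply: inU_val; lra.
have negf : k < 0 -> {in xs, forall x, inU x || bigR x} /\ count bigR xs = 1%N
                      /\ count inU xs = 3%N.
  move=> kn.
  have hkn : kr <= -1 by rewrite (ler_int algR k (-1)); lia.
  have [y1 /andP[a1 b1] m1] := @getroot (-1) 0 ltac:(lra) ltac:(rewrite /qe; nra).
  have [y2 /andP[a2 b2] m2] := @getroot 0 (3/4) ltac:(lra) ltac:(rewrite /qe; nra).
  have [y3 /andP[a3 b3] m3] := @getroot (3/4) 2 ltac:(lra) ltac:(rewrite /qe; nra).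
  have [y4 /andP[a4 b4] m4] := @getroot 2 (5/2) ltac:(lra) ltac:(rewrite /qe; nra).
  have hp := @four_perm xs y1 y2 y3 y4 sxs ltac:(lra) ltac:(lra) ltac:(lra) m1 m2 m3 m4.
  have i1 : inU (algRval y1) by apply: inU_val; lra.
  have i2 : inU (algRval y2) by apply: inU_val; lra.
  have i3 : inU (algRval y3) by apply: inU_val; lra.
  have i4 : bigR (algRval y4) by apply: bigR_val; lra.
  have j4 : inU (algRval y4) = false.
    by apply/negP => /inU_bigR; rewrite i4.
  split; last split.
  - move=> x; rewrite (perm_mem hp) !inE => /or4P [] /eqP ->;
      by rewrite ?i1 ?i2 ?i3 ?i4 ?orbT.
  - by rewrite ((permP hp) _) /= (@inU_bigR _ i1) (@inU_bigR _ i2) (@inU_bigR _ i3) i4.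
  - by rewrite ((permP hp) _) /= i1 i2 i3 j4.
have c12 : k \in [:: 1; 2] -> {in xs, forall x, x \notin Num.real}.
  move=> k12.
  have hk12 : 0 < kr <= 2.
    have [ka kb] : 0 < k /\ k <= 2 by move: k12; rewrite !inE => /orP[] /eqP ->.
    by apply/andP; split; [rewrite ltr0z | rewrite (ler_int algR k 2)].
  move=> x hx; apply/negP => xR.
  exact: (@L2 kr _ hk12 (realx x xR hx)).
have c36 : 3 <= k <= 6 -> count (fun x => x \in Num.real) xs = 2%N.
  move=> /andP[k3 k6].
  have hk3 : (3:algR) <= kr by rewrite (ler_int algR 3 k).
  have hk6 : kr <= 6 by rewrite (ler_int algR k 6).
  have [y1 /andP[a1 b1] m1] := @getroot (-1) (-1/3) ltac:(lra) ltac:(rewrite /qe; nra).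
  have [y2 /andP[a2 b2] m2] := @getroot (-1/3) 0 ltac:(lra) ltac:(rewrite /qe; nra).
  have neg : {in xs, forall x, x \in Num.real -> x < 0}.
    move=> x hx xR; have h := realx x xR hx.
    have [hn|hn] := ltP (in_algR xR) 0.
      have e : algRval (in_algR xR) < algRval 0 := hn.
      by rewrite rmorph0 in e.
    exfalso; apply: (@L3 kr (in_algR xR)) => //; apply/andP; split; lra.
  apply/eqP; rewrite eqn_leq; apply/andP; split.
  - rewrite leqNgt; apply/negP => h3.
    have hc := count_predC (fun x => x \in Num.real) xs; rewrite sxs in hc.
    case hcn: (count (predC (fun x => x \in Num.real)) xs) => [|[|n]].
    + have allr : {in xs, forall x, x \in Num.real}.
        move=> x hx; apply/negPn/negP => xN.
        have : has (predC (fun x => x \in Num.real)) xs by apply/hasP; exists x.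
        by rewrite has_count hcn.
      have e2 := hev 2.
      have q2 : qe kk 2 = 1 by rewrite /qe; ring.
      rewrite q2 in e2.
      have hpr : 2 ^+ size xs <= \prod_(x <- xs) (2 - x).
        apply: prod_ge => // x hx; rewrite lerDl oppr_ge0 ltW //.
        by apply: neg => //; apply: allr.
      rewrite sxs in hpr.
      have hk3c : (3:algC) <= kk by rewrite (ler_int algC 3 k).
      have : 3 * 2 ^+ 4 <= kk * \prod_(x <- xs) (2 - x).
        by apply: ler_pM => //; rewrite exprn_ge0.
      by rewrite -e2 -[X in X <= _]/(3%:R * 2%:R ^+ 4) -natrX -natrM lern1.
    + have : has (predC (fun x => x \in Num.real)) xs by rewrite has_count hcn.
      move=> /hasP [w hw /= wN].
      have hw' : w^* \in xs.
        by move: hw; rewrite !memxs -qe_conj => /eqP ->; rewrite rmorph0.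
      have wN' : w^* \notin Num.real by rewrite CrealE conjCK eq_sym -CrealE.
      have ww : w != w^* by rewrite eq_sym -CrealE.
      have := @two_count (predC (fun x => x \in Num.real)) _ _ xs ww hw hw' wN wN'.
      by rewrite hcn.
    + lia.
  - apply: (@two_count (fun x => x \in Num.real) (algRval y1) (algRval y2)) => //;
      rewrite ?algRvalP //.
    apply/eqP => e; have : y1 = y2 by apply: val_inj.
    by move=> e'; rewrite e' in b1; have := lt_trans b1 a2; rewrite ltxx.
split.
- move=> k12; apply: all_rsof => x hx.
  have [r1 n1 r2 n2] := @rtC x (c12 k12 x hx).
  by rewrite r1 n1 r2 n2.
- move=> k36.
  have kp : 0 < k by case/andP: k36 => h _; lia.
  have hc := c36 k36.
  split.
  + rewrite (@count_rsof _ (fun x => x \in Num.real)) ?hc // => x hx.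
    case: (boolP (x \in Num.real)) => xR.
      have := pos kp x hx; rewrite xR /= => /(@rtA x) [r1 n1 r2 n2].
      by rewrite n1 n2.
    have [r1 n1 r2 n2] := @rtC x xR.
    by rewrite (negPf n1) (negPf n2).
  + apply: all_rsof => x hx.
    case: (boolP (x \in Num.real)) => xR.
      have := pos kp x hx; rewrite xR /= => /(@rtA x) [r1 n1 r2 n2].
      by rewrite r1 r2 !implybT.
    have [r1 n1 r2 n2] := @rtC x xR.
    by rewrite r1 r2 !implybT.
  + rewrite (@count_rsof _ (fun x => x \notin Num.real)).
      have e : (count (fun x => x \in Num.real) xs +
                count (fun x => x \notin Num.real) xs = size xs)%N
        := count_predC _ _.
      rewrite hc sxs in e.
      have -> : count (fun x => x \notin Num.real) xs = 2%N by lia.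
      by [].
    move=> x hx.
    case: (boolP (x \in Num.real)) => xR /=.
      have := pos kp x hx; rewrite xR /= => /(@rtA x) [r1 n1 r2 n2].
      by rewrite n1 n2.
    have [r1 n1 r2 n2] := @rtC x xR.
    by rewrite r1 n1 r2 n2.
- move=> k7; apply: all_rsof => x hx.
  have [_ n1 _ n2] := @rtA x (ge7 k7 x hx).
  by rewrite n1 n2.
- move=> kn; have [hcl [cb cu]] := negf kn.
  split.
  + rewrite (@count_rsof _ bigR) ?cb // => x hx.
    case/orP: (hcl x hx) => h.
      have [r1 n1 r2 n2] := @rtA x h.
      by rewrite (negPf r1) (negPf r2) (@inU_bigR _ h).
    have /andP[xR x2] := h.
    have /andP[b1 b2] := @B1 x xR x2.
    by rewrite b1 b2 h.
  + rewrite (@count_rsof _ inU) ?cu // => x hx.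
    case/orP: (hcl x hx) => h.
      have [r1 n1 r2 n2] := @rtA x h.
      by rewrite r1 n1 r2 n2 h.
    have /andP[xR x2] := h.
    have /andP[b1 b2] := @B1 x xR x2.
    have hu : inU x = false by apply/negP => /(@inU_bigR x); rewrite h.
    by rewrite b1 b2 hu.
- move=> kp; apply: all_rsof => x hx.
  case/orP: (pos kp x hx) => h.
    by have [r1 _ r2 _] := @rtC x h; rewrite r1 r2.
  by have [r1 _ r2 _] := @rtA x h; rewrite r1 r2.
Qed.
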